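(* Let $A,B$ be timed automata, $p$ a state of $T(A)$, $q$ a state of $T(B)$, and let $Z_{(A,p)}$, $Z_{(B,q)}$ be their zone graphs with node sets $S_1,S_2$ and initial nodes $s_p,s_q$. For $\beta$ a sequence over $Act\cup\{\varepsilon\}$ built from $a$, let $\mathcal{R}_\beta$ be the (largest) symmetric relation between nodes such that $(s_1,s_2)\in\mathcal{R}_\beta$ iff for all $a\in Act$ and all $s_1'$, $s_1\xrightarrow{a}s_1'$ implies there is $s_2'$ with $s_2\xrightarrow{\beta}s_2'$ and $(s_1',s_2')\in\mathcal{R}_\beta$, and for all $s_1'$, $s_1\xrightarrow{\varepsilon}s_1'$ implies there is $s_2'$ with $s_2\xrightarrow{\varepsilon}s_2'$ and $(s_1',s_2')\in\mathcal{R}_\beta$. Then: $p\sim_u q$ iff $(s_p,s_q)\in\mathcal{R}_{a}$; $p\sim_y q$ iff $(s_p,s_q)\in\mathcal{R}_{\varepsilon.a}$; $p\sim_o q$ iff $(s_p,s_q)\in\mathcal{R}_{\varepsilon.a.\varepsilon}$.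
   Context: Timed automaton $A=(L,Act,l_0,E,C)$: finite locations, actions $Act$, clocks $C$, edges $(l,g,a,R,l')$ with guard $g$ a conjunction of $x\smile c$ ($c\in\mathbb{N}$, $\smile\in\{\le,<,=,>,\ge\}$), reset set $R$. $T(A)$: states $(l,v)$, $(l,v)\xrightarrow{d}(l,v+d)$ for $d\in\mathbb{R}_{\ge0}$, $(l,v)\xrightarrow{a}(l',v[R\leftarrow0])$ if $(l,g,a,R,l')\in E$, $v\models g$. Time abstracted relations (on states, symmetric relations $\mathcal{R}$ such that whenever $p_1\mathcal{R}p_2$, and always with the delay clause: $p_1\xrightarrow{d}p_1'$ implies $\exists d'\in\mathbb{R}_{\ge0}$, $p_2'$, $p_2\xrightarrow{d'}p_2'$, $p_1'\mathcal{R}p_2'$): time abstracted bisimulation additionally requires $p_1\xrightarrow{a}p_1'$ implies $p_2\xrightarrow{a}p_2'$ with $p_1'\mathcal{R}p_2'$; time abstracted delay bisimulation requires $p_1\xrightarrow{a}p_1'$ implies $p_2\xrightarrow{d}\xrightarrow{a}p_2'$ for some $d$ with $p_1'\mathcal{R}p_2'$; time abstracted observational bisimulation requires $p_1\xrightarrow{a}p_1'$ implies $p_2\xrightarrow{d_1}\xrightarrow{a}\xrightarrow{d_2}p_2'$ for some $d_1,d_2$ with $p_1'\mathcal{R}p_2'$. $\sim_u,\sim_y,\sim_o$ are the respective largest such relations. Zone graph $Z_{(A,p)}$: finite graph whose nodes are pairs $(l,z)$, $z$ a convex zone (conjunction of $x\smile c$, $x-y\smile c$), with initial node containing $p$, built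 by forward exploration from $p$ with location-dependent maximal constant abstraction; zones of a location pairwise disjoint; each zone uniform w.r.t. the atomic guard constraints of outgoing edges (also under time elapse); pre-stable (for each edge $(l,z)\to(l',z')$ every valuation of $z$ has a successor in $z'$). Edges: $(l,z)\xrightarrow{a}(l',z')$ if every $v\in z$ has $v'\in z'$ with $(l,v)\xrightarrow{a}(l',v')$; $(l,z)\xrightarrow{\varepsilon}(l,z')$ if some $v\in z$ delays to some $v'\in z'$; $\varepsilon$ reflexive and transitive. For a sequence $\beta$, $s\xrightarrow{\beta}s'$ means a path labelled successively by the letters of $\beta$. The relation is symmetric in the sense that the conditions also hold with the roles of the two zone graphs exchanged. *)

(* Defs.v *)
From Stdlib Require Export Reals List ZArith Relations.
Open Scope R_scope.

Set Implicit Arguments.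

Inductive cmp := CLe | CLt | CEq | CGt | CGe.

Definition cmp_sem (o : cmp) (a b : R) : Prop :=
  match o with
  | CLe => a <= b | CLt => a < b | CEq => a = b | CGt => a > b | CGe => a >= b
  end.

Definition valuation (C : Type) := C -> R.

Record guard_atom (C : Type) := GA { ga_clk : C; ga_cmp : cmp; ga_cst : nat }.
Definition guard (C : Type) := list (guard_atom C).

Definition ga_sat (C : Type) (v : valuation C) (g : guard_atom C) : Prop :=
  cmp_sem (ga_cmp g) (v (ga_clk g)) (INR (ga_cst g)).
Definition guard_sat (C : Type) (v : valuation C) (g : guard C) : Prop :=
  forall at_, In at_ g -> ga_sat v at_.

Record ta_edge (L C Act : Type) :=
  TE { te_src : L; te_guard : guard C; te_act : Act; te_reset : list C; te_dst : L }.

Record TA (L C Act : Type) := mkTA { ta_l0 : L; ta_edges : list (ta_edge L C Act) }.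

Definition finite_type (T : Type) : Prop := exists enum : list T, forall x, In x enum.

Definition state (L C : Type) := (L * valuation C)%type.

Definition nonneg_state (L C : Type) (s : state L C) : Prop := forall x, 0 <= snd s x.

Definition delay_step (L C : Type) (s s' : state L C) (d : R) : Prop :=
  0 <= d /\ fst s' = fst s /\ forall x, snd s' x = snd s x + d.

Definition reset_rel (C : Type) (Rs : list C) (v v' : valuation C) : Prop :=
  forall x, (In x Rs -> v' x = 0) /\ (~ In x Rs -> v' x = v x).

Definition act_step (L C Act : Type) (A : TA L C Act)
    (s : state L C) (a : Act) (s' : state L C) : Prop :=
  exists e, In e (ta_edges A) /\ te_src e = fst s /\ te_act e = a /\
    guard_sat (snd s) (te_guard e) /\ te_dst e = fst s' /\
    reset_rel (te_reset e) (snd s) (snd s').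

Inductive bkind := KU | KY | KO .

Definition weak_act (k : bkind) (L C Act : Type) (A : TA L C Act)
    (s : state L C) (a : Act) (s' : state L C) : Prop :=
  match k with
  | KU => act_step A s a s'
  | KY => exists d s1, delay_step s s1 d /\ act_step A s1 a s'
  | KO => exists d1 d2 s1 s2,
            delay_step s s1 d1 /\ act_step A s1 a s2 /\ delay_step s2 s' d2
  end.

(** A relation between the states of T(A) and T(B), read as a symmetric
    relation on the disjoint union: both transfer directions are required. *)
Definition ta_bisim (k : bkind) (L1 C1 L2 C2 Act : Type)
    (A : TA L1 C1 Act) (B : TA L2 C2 Act)
    (Rl : state L1 C1 -> state L2 C2 -> Prop) : Prop :=
  forall p1 p2, Rl p1 p2 ->
    (forall d p1', delay_step p1 p1' d ->
        exists d' p2', delay_step p2 p2' d' /\ Rl p1' p2') /\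
    (forall d p2', delay_step p2 p2' d ->
        exists d' p1', delay_step p1 p1' d' /\ Rl p1' p2') /\
    (forall a p1', act_step A p1 a p1' ->
        exists p2', weak_act k B p2 a p2' /\ Rl p1' p2') /\
    (forall a p2', act_step B p2 a p2' ->
        exists p1', weak_act k A p1 a p1' /\ Rl p1' p2').

Definition ta_bisimilar (k : bkind) (L1 C1 L2 C2 Act : Type)
    (A : TA L1 C1 Act) (B : TA L2 C2 Act) (p : state L1 C1) (q : state L2 C2) : Prop :=
  exists Rl, ta_bisim k A B Rl /\ Rl p q.

Definition sim_u L1 C1 L2 C2 Act (A : TA L1 C1 Act) (B : TA L2 C2 Act) p q :=
  ta_bisimilar KU A B p q.
Definition sim_y L1 C1 L2 C2 Act (A : TA L1 C1 Act) (B : TA L2 C2 Act) p q :=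
  ta_bisimilar KY A B p q.
Definition sim_o L1 C1 L2 C2 Act (A : TA L1 C1 Act) (B : TA L2 C2 Act) p q :=
  ta_bisimilar KO A B p q.

Inductive zatom (C : Type) :=
  | ZS (x : C) (o : cmp) (c : Z)
  | ZD (x y : C) (o : cmp) (c : Z).

Definition zone (C : Type) := list (zatom C).

Definition zatom_sat (C : Type) (v : valuation C) (z : zatom C) : Prop :=
  match z with
  | ZS x o c => cmp_sem o (v x) (IZR c)
  | ZD x y o c => cmp_sem o (v x - v y) (IZR c)
  end.
Definition zone_sat (C : Type) (v : valuation C) (z : zone C) : Prop :=
  forall at_, In at_ z -> zatom_sat v at_.

Definition node (L C : Type) := (L * zone C)%type.

Definition in_node (L C : Type) (s : state L C) (n : node L C) : Prop :=
  fst s = fst n /\ zone_sat (snd s) (snd n).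

Record zone_graph (L C : Type) := ZG { zg_nodes : list (node L C); zg_init : node L C }.

Definition zg_act (L C Act : Type) (A : TA L C Act) (G : zone_graph L C)
    (n : node L C) (a : Act) (n' : node L C) : Prop :=
  In n (zg_nodes G) /\ In n' (zg_nodes G) /\
  forall s, in_node s n -> exists s', act_step A s a s' /\ in_node s' n'.

Definition zg_eps_base (L C : Type) (G : zone_graph L C) (n n' : node L C) : Prop :=
  In n (zg_nodes G) /\ In n' (zg_nodes G) /\ fst n = fst n' /\
  exists s s' d, in_node s n /\ in_node s' n' /\ delay_step s s' d.

Definition zg_eps (L C : Type) (G : zone_graph L C) : relation (node L C) :=
  clos_refl_trans (node L C) (zg_eps_base G).

Definition zg_beta (k : bkind) (L C Act : Type) (A : TA L C Act) (G : zone_graph L C)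
    (n : node L C) (a : Act) (n' : node L C) : Prop :=
  match k with
  | KU => zg_act A G n a n'
  | KY => exists m, zg_eps G n m /\ zg_act A G m a n'
  | KO => exists m m', zg_eps G n m /\ zg_act A G m a m' /\ zg_eps G m' n'
  end.

(** The conditions defining the relation R_beta between the two zone graphs
    (symmetric: conditions required in both directions). *)
Definition zg_rel (k : bkind) (L1 C1 L2 C2 Act : Type)
    (A : TA L1 C1 Act) (B : TA L2 C2 Act)
    (G1 : zone_graph L1 C1) (G2 : zone_graph L2 C2)
    (Rl : node L1 C1 -> node L2 C2 -> Prop) : Prop :=
  forall n1 n2, Rl n1 n2 ->
    (forall a n1', zg_act A G1 n1 a n1' ->
        exists n2', zg_beta k B G2 n2 a n2' /\ Rl n1' n2') /\
    (forall n1', zg_eps G1 n1 n1' ->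
        exists n2', zg_eps G2 n2 n2' /\ Rl n1' n2') /\
    (forall a n2', zg_act B G2 n2 a n2' ->
        exists n1', zg_beta k A G1 n1 a n1' /\ Rl n1' n2') /\
    (forall n2', zg_eps G2 n2 n2' ->
        exists n1', zg_eps G1 n1 n1' /\ Rl n1' n2').

Definition zg_related (k : bkind) (L1 C1 L2 C2 Act : Type)
    (A : TA L1 C1 Act) (B : TA L2 C2 Act)
    (G1 : zone_graph L1 C1) (G2 : zone_graph L2 C2)
    (n1 : node L1 C1) (n2 : node L2 C2) : Prop :=
  exists Rl, zg_rel k A B G1 G2 Rl /\ Rl n1 n2.

Definition is_zone_graph (L C Act : Type) (A : TA L C Act) (p : state L C)
    (G : zone_graph L C) : Prop :=
  In (zg_init G) (zg_nodes G) /\ in_node p (zg_init G) /\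
  (forall n, In n (zg_nodes G) ->
     (exists v, zone_sat v (snd n)) /\
     (forall v, zone_sat v (snd n) -> forall x, 0 <= v x)) /\
  (forall n1 n2, In n1 (zg_nodes G) -> In n2 (zg_nodes G) -> fst n1 = fst n2 ->
     (exists v, zone_sat v (snd n1) /\ zone_sat v (snd n2)) ->
     forall v, zone_sat v (snd n1) <-> zone_sat v (snd n2)) /\
  (forall n e g, In n (zg_nodes G) -> In e (ta_edges A) -> te_src e = fst n ->
     In g (te_guard e) ->
     forall v w, zone_sat v (snd n) -> zone_sat w (snd n) ->
       (ga_sat v g <-> ga_sat w g) /\
       ((exists d, 0 <= d /\ ga_sat (fun x => v x + d) g) <->
        (exists d, 0 <= d /\ ga_sat (fun x => w x + d) g))) /\
  (forall n s, In n (zg_nodes G) -> in_node s n ->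
     (forall a s', act_step A s a s' -> exists n', In n' (zg_nodes G) /\ in_node s' n') /\
     (forall d s', delay_step s s' d -> exists n', In n' (zg_nodes G) /\ in_node s' n')) /\
  (forall n n' s s' a, In n (zg_nodes G) -> In n' (zg_nodes G) ->
     in_node s n -> in_node s' n' -> act_step A s a s' ->
     forall t, in_node t n -> exists t', act_step A t a t' /\ in_node t' n') /\
  (forall n n' s s' d, In n (zg_nodes G) -> In n' (zg_nodes G) ->
     in_node s n -> in_node s' n' -> delay_step s s' d ->
     forall t, in_node t n -> exists t' d', delay_step t t' d' /\ in_node t' n').

(* Main.v *)
Require Import Defs.
From Stdlib Require Import Reals Lra.
Open Scope R_scope.
Set Implicit Arguments.

Section Aux.
Variables (L C Act : Type) (A : TA L C Act) (p : state L C) (G : zone_graph L C).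
Hypothesis hG : is_zone_graph A p G.

Lemma eps_in n n' : zg_eps G n n' -> In n (zg_nodes G) -> In n' (zg_nodes G).
Proof.
  induction 1 as [x y H| x | x y z _ IH1 _ IH2]; intros Hx; auto.
  destruct H as [_ [H _]]; auto.
Qed.

Lemma delay_comp (s1 s2 s3 : state L C) d1 d2 :
  delay_step s1 s2 d1 -> delay_step s2 s3 d2 -> delay_step s1 s3 (d1 + d2).
Proof.
  intros [H1 [H2 H3]] [K1 [K2 K3]]; split; [lra|split; [congruence|]].
  intros x; rewrite K3, H3; ring.
Qed.

Lemma eps_delay n n' : zg_eps G n n' -> In n (zg_nodes G) ->
  forall s, in_node s n -> exists d s', delay_step s s' d /\ in_node s' n'.
Proof.
  destruct hG as [_ [_ [_ [_ [_ [_ [_ Hpd]]]]]]].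
  induction 1 as [x y H| x | x y z H1 IH1 H2 IH2]; intros Hx s Hs.
  - destruct H as [Hx' [Hy [_ [s0 [s0' [d0 [A1 [A2 A3]]]]]]]].
    destruct (Hpd x y s0 s0' d0 Hx Hy A1 A2 A3 s Hs) as [t [d [T1 T2]]].
    exists d, t; auto.
  - exists 0, s; split; auto. split; [lra|split; auto]. intros; ring.
  - destruct (IH1 Hx s Hs) as [d1 [s1 [D1 S1]]].
    assert (Hy : In y (zg_nodes G)) by (eapply eps_in; eauto).
    destruct (IH2 Hy s1 S1) as [d2 [s2 [D2 S2]]].
    exists (d1 + d2), s2; split; auto. eapply delay_comp; eauto.
Qed.

Lemma state_node_act n s a s' : In n (zg_nodes G) -> in_node s n -> act_step A s a s' ->
  exists n', In n' (zg_nodes G) /\ in_node s' n' /\ zg_act A G n a n'.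
Proof.
  destruct hG as [_ [_ [_ [_ [_ [Hfwd [Hpa _]]]]]]]. intros Hn Hs Ha.
  destruct (proj1 (Hfwd n s Hn Hs) a s' Ha) as [n' [Hn' Hs']].
  exists n'; split; [exact Hn'|split; [exact Hs'|]].
  split; [exact Hn|split; [exact Hn'|]].
  intros t Ht. exact (Hpa n n' s s' a Hn Hn' Hs Hs' Ha t Ht).
Qed.

Lemma state_node_delay n s d s' : In n (zg_nodes G) -> in_node s n -> delay_step s s' d ->
  exists n', In n' (zg_nodes G) /\ in_node s' n' /\ zg_eps G n n'.
Proof.
  destruct hG as [_ [_ [_ [_ [_ [Hfwd _]]]]]]. intros Hn Hs Hd.
  destruct (proj2 (Hfwd n s Hn Hs) d s' Hd) as [n' [Hn' Hs']].
  exists n'; split; [exact Hn'|split; [exact Hs'|]].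
  apply rt_step. split; [exact Hn|split; [exact Hn'|split]].
  - destruct Hs as [E1 _]; destruct Hs' as [E2 _]; destruct Hd as [_ [E3 _]]. congruence.
  - exists s, s', d; auto.
Qed.

Lemma weak_to_beta k n s a s' : In n (zg_nodes G) -> in_node s n -> weak_act k A s a s' ->
  exists n', In n' (zg_nodes G) /\ in_node s' n' /\ zg_beta k A G n a n'.
Proof.
  intros Hn Hs; destruct k; simpl.
  - intros Ha; apply state_node_act with s; auto.
  - intros [d [s1 [Hd Ha]]].
    destruct (state_node_delay Hn Hs Hd) as [m [Hm [Hs1 He]]].
    destruct (state_node_act Hm Hs1 Ha) as [n' [Hn' [Hs' Hz]]].
    exists n'; split; auto; split; auto. exists m; auto.
  - intros [d1 [d2 [s1 [s2 [Hd1 [Ha Hd2]]]]]].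
    destruct (state_node_delay Hn Hs Hd1) as [m [Hm [Hs1 He]]].
    destruct (state_node_act Hm Hs1 Ha) as [m' [Hm' [Hs2 Hz]]].
    destruct (state_node_delay Hm' Hs2 Hd2) as [n' [Hn' [Hs' He']]].
    exists n'; split; auto; split; auto. exists m, m'; auto.
Qed.

Lemma beta_to_weak k n s a n' : In n (zg_nodes G) -> in_node s n -> zg_beta k A G n a n' ->
  exists s', weak_act k A s a s' /\ in_node s' n' /\ In n' (zg_nodes G).
Proof.
  intros Hn Hs; destruct k; simpl.
  - intros [_ [Hn' Hz]]. destruct (Hz s Hs) as [s' [H1 H2]]. exists s'; auto.
  - intros [m [He [Hm [Hn' Hz]]]].
    destruct (eps_delay He Hn Hs) as [d [s1 [Hd Hs1]]].
    destruct (Hz s1 Hs1) as [s' [H1 H2]]. exists s'; split; auto.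
    exists d, s1; auto.
  - intros [m [m' [He [[Hm [Hm' Hz]] He']]]].
    destruct (eps_delay He Hn Hs) as [d [s1 [Hd Hs1]]].
    destruct (Hz s1 Hs1) as [s2 [H1 H2]].
    destruct (eps_delay He' Hm' H2) as [d2 [s' [Hd2 Hs']]].
    exists s'; split; [|split; auto; eapply eps_in; eauto].
    exists d, d2, s1, s2; auto.
Qed.
End Aux.

Lemma bisim_flip k L1 C1 L2 C2 Act (A : TA L1 C1 Act) (B : TA L2 C2 Act) R :
  ta_bisim k A B R -> ta_bisim k B A (fun x y => R y x).
Proof.
  intros H p2 p1 Hr. destruct (H p1 p2 Hr) as [H1 [H2 [H3 H4]]].
  repeat split; auto.
Qed.

Lemma zrel_flip k L1 C1 L2 C2 Act (A : TA L1 C1 Act) (B : TA L2 C2 Act) G1 G2 R :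
  zg_rel k A B G1 G2 R -> zg_rel k B A G2 G1 (fun x y => R y x).
Proof.
  intros H p2 p1 Hr. destruct (H p1 p2 Hr) as [H1 [H2 [H3 H4]]].
  repeat split; auto.
Qed.

Section Dir.
Variables (k : bkind) (L1 C1 L2 C2 Act : Type) (A : TA L1 C1 Act) (B : TA L2 C2 Act)
  (p : state L1 C1) (q : state L2 C2) (G1 : zone_graph L1 C1) (G2 : zone_graph L2 C2).
Hypothesis hG1 : is_zone_graph A p G1.
Hypothesis hG2 : is_zone_graph B q G2.

Lemma dir1_act R : ta_bisim k A B R -> forall n1 n2 s1 s2,
  In n2 (zg_nodes G2) -> in_node s1 n1 -> in_node s2 n2 -> R s1 s2 ->
  forall a n1', zg_act A G1 n1 a n1' ->
  exists n2', zg_beta k B G2 n2 a n2' /\ In n1' (zg_nodes G1) /\ In n2' (zg_nodes G2) /\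
   exists s1' s2', in_node s1' n1' /\ in_node s2' n2' /\ R s1' s2'.
Proof.
  intros HR n1 n2 s1 s2 Hn2 Hs1 Hs2 Hr a n1' [_ [Hn1' Hz]].
  destruct (Hz s1 Hs1) as [s1' [Ha Hs1']].
  destruct (proj1 (proj2 (proj2 (HR s1 s2 Hr))) a s1' Ha) as [s2' [Hw Hr']].
  destruct (weak_to_beta hG2 k a s2' Hn2 Hs2 Hw) as [n2' [Hn2' [Hs2' Hb]]].
  exists n2'; repeat split; auto. exists s1', s2'; auto.
Qed.

Lemma dir1_eps R : ta_bisim k A B R -> forall n1 n2 s1 s2,
  In n1 (zg_nodes G1) -> In n2 (zg_nodes G2) -> in_node s1 n1 -> in_node s2 n2 -> R s1 s2 ->
  forall n1', zg_eps G1 n1 n1' ->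
  exists n2', zg_eps G2 n2 n2' /\ In n1' (zg_nodes G1) /\ In n2' (zg_nodes G2) /\
   exists s1' s2', in_node s1' n1' /\ in_node s2' n2' /\ R s1' s2'.
Proof.
  intros HR n1 n2 s1 s2 Hn1 Hn2 Hs1 Hs2 Hr n1' He.
  destruct (eps_delay hG1 He Hn1 Hs1) as [d [s1' [Hd Hs1']]].
  destruct (proj1 (HR s1 s2 Hr) d s1' Hd) as [d' [s2' [Hd' Hr']]].
  destruct (state_node_delay hG2 Hn2 Hs2 Hd') as [n2' [Hn2' [Hs2' He']]].
  exists n2'; repeat split; auto. eapply eps_in; eauto. exists s1', s2'; auto.
Qed.

Lemma dir2_delay Rz : zg_rel k A B G1 G2 Rz -> forall n1 n2 s1 s2,
  In n1 (zg_nodes G1) -> In n2 (zg_nodes G2) -> in_node s1 n1 -> in_node s2 n2 -> Rz n1 n2 ->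
  forall d s1', delay_step s1 s1' d ->
  exists d' s2', delay_step s2 s2' d' /\ exists n1' n2', In n1' (zg_nodes G1) /\
    In n2' (zg_nodes G2) /\ in_node s1' n1' /\ in_node s2' n2' /\ Rz n1' n2'.
Proof.
  intros HR n1 n2 s1 s2 Hn1 Hn2 Hs1 Hs2 Hr d s1' Hd.
  destruct (state_node_delay hG1 Hn1 Hs1 Hd) as [n1' [Hn1' [Hs1' He]]].
  destruct (proj1 (proj2 (HR n1 n2 Hr)) n1' He) as [n2' [He' Hr']].
  destruct (eps_delay hG2 He' Hn2 Hs2) as [d' [s2' [Hd' Hs2']]].
  exists d', s2'; split; auto. exists n1', n2'.
  split; [exact Hn1'|split; [eapply eps_in; eauto|split; [exact Hs1'|split; [exact Hs2'|exact Hr']]]].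
Qed.

Lemma dir2_act Rz : zg_rel k A B G1 G2 Rz -> forall n1 n2 s1 s2,
  In n1 (zg_nodes G1) -> In n2 (zg_nodes G2) -> in_node s1 n1 -> in_node s2 n2 -> Rz n1 n2 ->
  forall a s1', act_step A s1 a s1' ->
  exists s2', weak_act k B s2 a s2' /\ exists n1' n2', In n1' (zg_nodes G1) /\
    In n2' (zg_nodes G2) /\ in_node s1' n1' /\ in_node s2' n2' /\ Rz n1' n2'.
Proof.
  intros HR n1 n2 s1 s2 Hn1 Hn2 Hs1 Hs2 Hr a s1' Ha.
  destruct (state_node_act hG1 Hn1 Hs1 Ha) as [n1' [Hn1' [Hs1' Hz]]].
  destruct (proj1 (HR n1 n2 Hr) a n1' Hz) as [n2' [Hb Hr']].
  destruct (beta_to_weak hG2 k a n2' Hn2 Hs2 Hb) as [s2' [Hw [Hs2' Hn2']]].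
  exists s2'; split; auto. exists n1', n2'.
  split; [exact Hn1'|split; [exact Hn2'|split; [exact Hs1'|split; [exact Hs2'|exact Hr']]]].
Qed.
End Dir.

Lemma main_k k (Act L1 C1 L2 C2 : Type)
  (A : TA L1 C1 Act) (B : TA L2 C2 Act)
  (p : state L1 C1) (q : state L2 C2)
  (G1 : zone_graph L1 C1) (G2 : zone_graph L2 C2)
  (hG1 : is_zone_graph A p G1) (hG2 : is_zone_graph B q G2) :
  ta_bisimilar k A B p q <-> zg_related k A B G1 G2 (zg_init G1) (zg_init G2).
Proof.
  split.
  - intros [R [HR Hpq]].
    exists (fun n1 n2 => In n1 (zg_nodes G1) /\ In n2 (zg_nodes G2) /\
      exists s1 s2, in_node s1 n1 /\ in_node s2 n2 /\ R s1 s2).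
    split.
    + intros n1 n2 [Hn1 [Hn2 [s1 [s2 [Hs1 [Hs2 Hr]]]]]].
      assert (HR' := bisim_flip HR).
      split; [|split; [|split]].
      * intros a n1' Hz.
        destruct (dir1_act hG2 HR Hn2 Hs1 Hs2 Hr Hz) as [n2' [Hb [X [Y [t1 [t2 [T1 [T2 T3]]]]]]]].
        exists n2'; split; auto. repeat split; auto. exists t1, t2; auto.
      * intros n1' He.
        destruct (dir1_eps hG1 hG2 HR Hn1 Hn2 Hs1 Hs2 Hr He) as [n2' [Hb [X [Y [t1 [t2 [T1 [T2 T3]]]]]]]].
        exists n2'; split; auto. repeat split; auto. exists t1, t2; auto.
      * intros a n2' Hz.
        destruct (dir1_act (k:=k) (A:=B) (B:=A) (G1:=G2) hG1 HR' Hn1 Hs2 Hs1 Hr Hz) as [n1' [Hb [X [Y [t2 [t1 [T1 [T2 T3]]]]]]]].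
        exists n1'; split; auto. repeat split; auto. exists t1, t2; auto.
      * intros n2' He.
        destruct (dir1_eps (k:=k) hG2 hG1 HR' Hn2 Hn1 Hs2 Hs1 Hr He) as [n1' [Hb [X [Y [t2 [t1 [T1 [T2 T3]]]]]]]].
        exists n1'; split; auto. repeat split; auto. exists t1, t2; auto.
    + destruct hG1 as [I1 [P1 _]]; destruct hG2 as [I2 [P2 _]].
      repeat split; auto. exists p, q; auto.
  - intros [Rz [HR Hi]].
    exists (fun s1 s2 => exists n1 n2, In n1 (zg_nodes G1) /\ In n2 (zg_nodes G2) /\
      in_node s1 n1 /\ in_node s2 n2 /\ Rz n1 n2).
    split.
    + intros s1 s2 [n1 [n2 [Hn1 [Hn2 [Hs1 [Hs2 Hr]]]]]].
      assert (HR' := zrel_flip HR).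
      split; [|split; [|split]].
      * intros d s1' Hd.
        destruct (dir2_delay (k:=k) hG1 hG2 HR Hn1 Hn2 Hs1 Hs2 Hr Hd) as [d' [s2' [Hd' X]]].
        exists d', s2'; auto.
      * intros d s2' Hd.
        destruct (dir2_delay (k:=k) hG2 hG1 HR' Hn2 Hn1 Hs2 Hs1 Hr Hd) as [d' [s1' [Hd' [m2 [m1 [X1 [X2 [X3 [X4 X5]]]]]]]]].
        exists d', s1'; split; auto. exists m1, m2; auto.
      * intros a s1' Ha.
        destruct (dir2_act hG1 hG2 HR Hn1 Hn2 Hs1 Hs2 Hr Ha) as [s2' [Hw X]].
        exists s2'; auto.
      * intros a s2' Ha.
        destruct (dir2_act hG2 hG1 HR' Hn2 Hn1 Hs2 Hs1 Hr Ha) as [s1' [Hw [m2 [m1 [X1 [X2 [X3 [X4 X5]]]]]]]].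
        exists s1'; split; auto. exists m1, m2; auto.
    + destruct hG1 as [I1 [P1 _]]; destruct hG2 as [I2 [P2 _]].
      exists (zg_init G1), (zg_init G2); auto.
Qed.

Theorem theorem5 (Act L1 C1 L2 C2 : Type)
  (fL1 : finite_type L1) (fC1 : finite_type C1)
  (fL2 : finite_type L2) (fC2 : finite_type C2)
  (A : TA L1 C1 Act) (B : TA L2 C2 Act)
  (p : state L1 C1) (q : state L2 C2)
  (hp : nonneg_state p) (hq : nonneg_state q)
  (G1 : zone_graph L1 C1) (G2 : zone_graph L2 C2)
  (hG1 : is_zone_graph A p G1) (hG2 : is_zone_graph B q G2) :
  (sim_u A B p q <-> zg_related KU A B G1 G2 (zg_init G1) (zg_init G2)) /\
  (sim_y A B p q <-> zg_related KY A B G1 G2 (zg_init G1) (zg_init G2)) /\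
  (sim_o A B p q <-> zg_related KO A B G1 G2 (zg_init G1) (zg_init G2)).
Proof.
  split; [|split]; apply main_k with (p := p) (q := q); auto.
Qed.
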